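(* Let $G\sim\mathrm{SBM}(n;C,P)$ with communities $V_1,\dots,V_c$, let $\mathbf{k}=(\mathbf{k}_1,\dots,\mathbf{k}_c)\in\mathbb{N}_0^c$ with $\mathbf{k}_\ell\le|V_\ell|$, and let $R$ consist of $\mathbf{k}_\ell$ vertices of $V_\ell$ for each $\ell$, chosen independently of the edges of $G$ (e.g. fixed, or uniformly at random within each community). Let $W$ be the number of unordered pairs of distinct rows of $\mathbf{A}^*$ that coincide on all columns in $R$. Then $$\mathbb{P}(R\text{ does not resolve }\mathbf{A}^* )=\mathbb{P}(W>0)\le\mathbb{E}(W)\le f(\mathbf{k}):=\sum_{1\le i\le j\le c}s(i,j)\prod_{\ell=1}^c r(i,j,\ell)^{\mathbf{k}_\ell},$$ where $s(i,i):=\binom{|V_i|}{2}$, $s(i,j):=|V_i||V_j|$ for $i\ne j$, and $r(i,j,\ell):=P(i,\ell)P(j,\ell)+(1-P(i,\ell))(1-P(j,\ell))$. Moreover $f$ is nonincreasing with respect to the componentwise order on $\mathbb{N}_0^c$, and whenever $R$ resolves $\mathbf{A}^*$ it is a resolving set of $G$.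
   Context: Stochastic Block Model: $G\sim\mathrm{SBM}(n;C,P)$, for a partition $C=\{V_1,\dots,V_c\}$ of $V=\{1,\dots,n\}$ and a symmetric $c\times c$ matrix $P$ with entries in $[0,1]$, is the random simple undirected graph on $V$ in which, independently for each pair of distinct vertices $u\in V_i$, $v\in V_j$, the edge $\{u,v\}$ is present with probability $P(i,j)$. $\mathbf{A}^*$ is the adjacency matrix of $G$ with every diagonal entry replaced by $2$. A set $R$ of columns resolves a matrix if its rows restricted to the columns of $R$ are pairwise distinct; a set $R$ of vertices resolves $G$ if every vertex is uniquely determined by its vector of shortest-path distances to the vertices of $R$. *)

(* Defs.v *)
From HB Require Import structures.
From mathcomp Require Import all_boot all_order all_algebra.
Set Implicit Arguments. Unset Strict Implicit. Unset Printing Implicit Defensive.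
Import Order.TTheory GRing.Theory Num.Theory.

Section SBM.
Variable n : nat.
Local Notation V := ('I_n).

(* A simple undirected graph on V is encoded by the set E of its edges {u,v}
   written as ordered pairs (u,v) with u < v. *)
Definition upairs : {set V * V} := [set p : V * V | (p.1 < p.2)%N].

Definition adj (E : {set V * V}) (u v : V) : bool :=
  ((u, v) \in E) || ((v, u) \in E).

Definition Astar (E : {set V * V}) (u v : V) : nat :=
  if u == v then 2 else nat_of_bool (adj E u v).

Definition rows_agree (E : {set V * V}) (R : {set V}) (u v : V) : bool :=
  [forall r in R, Astar E u r == Astar E v r].

Definition resolves_mx (E : {set V * V}) (R : {set V}) : bool :=
  [forall u, forall v, (u != v) ==> ~~ rows_agree E R u v].

Definition Wcount (E : {set V * V}) (R : {set V}) : nat :=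
  #|[set p : V * V | (p.1 < p.2)%N & rows_agree E R p.1 p.2]|.

Fixpoint ball (E : {set V * V}) (u : V) (d : nat) : {set V} :=
  match d with
  | 0 => [set u]
  | d'.+1 => ball E u d' :|: [set v | [exists w in ball E u d', adj E w v]]
  end.

(* shortest-path distance; None = infinite (different components).
   Finite distances are < n. *)
Definition dist (E : {set V * V}) (u v : V) : option nat :=
  let d := find (fun d => v \in ball E u d) (iota 0 n) in
  if (d < n)%N then Some d else None.

Definition resolves_graph (E : {set V * V}) (R : {set V}) : Prop :=
  forall u v : V, (forall r, r \in R -> dist E r u = dist E r v) -> u = v.

Variable (Rr : realFieldType) (c : nat) (comm : V -> 'I_c) (P : 'M[Rr]_c).

Definition sbm_weight (E : {set V * V}) : Rr :=
  (\prod_(p in upairs)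
     (if p \in E then P (comm p.1) (comm p.2) else 1 - P (comm p.1) (comm p.2)))%R.

Definition sbm_prob (A : pred {set V * V}) : Rr :=
  (\sum_(E in powerset upairs | A E) sbm_weight E)%R.

Definition sbm_exp (X : {set V * V} -> nat) : Rr :=
  (\sum_(E in powerset upairs) sbm_weight E * (X E)%:R)%R.

Definition csize (i : 'I_c) : nat := #|[set v : V | comm v == i]|.

Definition s_coef (i j : 'I_c) : nat :=
  if i == j then 'C(csize i, 2) else csize i * csize j.

Definition r_coef (i j l : 'I_c) : Rr :=
  (P i l * P j l + (1 - P i l) * (1 - P j l))%R.

Definition fbound (k : 'I_c -> nat) : Rr :=
  (\sum_(i : 'I_c) \sum_(j : 'I_c | (i <= j)%N)
     (s_coef i j)%:R * \prod_(l : 'I_c) r_coef i j l ^+ k l)%R.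

End SBM.

(* Main.v *)
Require Import Defs.
From HB Require Import structures.
From mathcomp Require Import all_boot all_order all_algebra.
From mathcomp Require Import zify ring lra.
Set Implicit Arguments. Unset Strict Implicit. Unset Printing Implicit Defensive.
Import Order.TTheory GRing.Theory Num.Theory.

Section Generic.
Local Open Scope ring_scope.
Lemma SL (T : finType) (R : comNzRingType) (A B : {set T}) (F : {set T} -> R) :
 [disjoint A & B] ->
 \sum_(E in powerset (A :|: B)) F E =
 \sum_(E1 in powerset A) \sum_(E2 in powerset B) F (E1 :|: E2).
Proof.
move=> dAB.
rewrite pair_big_dep /=.
rewrite (reindex_onto (fun p : {set T} * {set T} => p.1 :|: p.2)
           (fun E => (E :&: A, E :&: B))) /=; last first.
  by move=> E; rewrite powersetE => sE; rewrite -setIUr; apply/setIidPl.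
apply: eq_bigl => -[E1 E2] /=.
rewrite !powersetE.
apply/idP/idP.
  case/andP=> s12 /eqP [<- <-]; by rewrite subsetIr subsetIr.
case/andP=> s1 s2; rewrite (setUSS s1 s2) /=.
have e1 : (E1 :|: E2) :&: A = E1.
  rewrite setIUl (setIidPl s1).
  suff -> : E2 :&: A = set0 by rewrite setU0.
  apply/eqP; rewrite setI_eq0; apply: disjointWl s2 _; by rewrite disjoint_sym.
have e2 : (E1 :|: E2) :&: B = E2.
  rewrite setIUl (setIidPl s2).
  suff -> : E1 :&: B = set0 by rewrite set0U.
  apply/eqP; rewrite setI_eq0; exact: disjointWl s1 _.
by rewrite e1 e2.
Qed.
Lemma L1 (T : finType) (R : comNzRingType) (U : {set T}) (c : T -> bool -> R) :
 \sum_(E in powerset U) \prod_(p in U) c p (p \in E) =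
 \prod_(p in U) (c p true + c p false).
Proof.
have := @bigA_distr R 0 1 *%R +%R T (fun p => if p \in U then c p true else 0)
          (fun p => if p \in U then c p false else 1).
rewrite [in RHS](bigID (fun J : {set T} => J \in powerset U)) /=.
rewrite [X in _ = _ + X]big1 ?addr0; last first.
  move=> J; rewrite powersetE => /subsetPn [p pJ pU].
  by rewrite (bigD1 p) //= pJ (negbTE pU) mul0r.
have -> : \prod_i ((if i \in U then c i true else 0) + (if i \in U then c i false else 1))
   = \prod_(p in U) (c p true + c p false).
  by rewrite [RHS]big_mkcond /=; apply: eq_bigr => p _; case: ifP; rewrite ?addr0 ?add0r.
move=> ->; apply: eq_big => // J; rewrite powersetE => sJ.
rewrite big_mkcond /=; apply: eq_bigr => p _.
case: ifP => pU; first by case: ifP.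
by case: ifP => // pJ; move/subsetP: sJ => /(_ p pJ); rewrite pU.
Qed.

Lemma IND (T : finType) (R : comNzRingType) (A B : {set T}) (a : T -> bool -> R)
  (F : {set T} -> R) : [disjoint A & B] ->
 \sum_(E in powerset (A :|: B)) (\prod_(p in A :|: B) a p (p \in E)) * F E =
 \sum_(E1 in powerset A) (\prod_(p in A) a p (p \in E1)) *
    \sum_(E2 in powerset B) (\prod_(p in B) a p (p \in E2)) * F (E1 :|: E2).
Proof.
move=> dAB; rewrite SL //; apply: eq_bigr => E1; rewrite powersetE => s1.
rewrite big_distrr /=; apply: eq_bigr => E2; rewrite powersetE => s2.
rewrite mulrA; congr (_ * _).
rewrite (eq_bigl [predU A & B]); last by move=> p; rewrite !inE.
rewrite bigU //=; congr (_ * _); apply: eq_bigr => p pA; rewrite inE.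
  suff -> : (p \in E2) = false by rewrite orbF.
  apply: negbTE; apply/negP => /(subsetP s2) pB.
  by move: dAB; rewrite disjoint_sym => /disjointFr /(_ pB); rewrite pA.
suff -> : (p \in E1) = false by [].
apply: negbTE; apply/negP => /(subsetP s1) pA'.
by move: dAB => /disjointFr /(_ pA'); rewrite pA.
Qed.

Lemma prod_pull (I T : finType) (R : comNzRingType) (S : {set I}) (U : {set T})
  (f : I -> T) (H : I -> R) :
 {in S &, injective f} -> (forall i, i \in S -> f i \in U) ->
 \prod_(i in S) H i = \prod_(p in U) oapp H 1 [pick i in S | f i == p].
Proof.
move=> inj sub.
rewrite (big_setID (f @: S)) /=.
rewrite [X in _ = _ * X]big1 ?mulr1; last first.
  move=> p; rewrite inE => /andP [nfS _].
  case: pickP => // i /andP [iS /eqP fip].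
  by move: nfS; rewrite -fip (imset_f _ iS).
have -> : U :&: (f @: S) = f @: S.
  apply/setIidPr/subsetP => p /imsetP [i iS ->]; exact: sub.
rewrite big_imset //; apply: eq_bigr => i iS.
case: pickP => [j /andP [jS /eqP fj]|]; first by rewrite (inj _ _ jS iS fj).
by move/(_ i); rewrite iS eqxx.
Qed.
Lemma GL (T I : finType) (R : comNzRingType) (U : {set T}) (S : {set I})
  (x y : I -> T) (a : T -> bool -> R) :
  (forall p, p \in U -> a p true + a p false = 1) ->
  {in S &, injective x} -> {in S &, injective y} ->
  (forall i, i \in S -> x i \in U) -> (forall i, i \in S -> y i \in U) ->
  (forall i j, i \in S -> j \in S -> x i != y j) ->
  \sum_(E in powerset U) (\prod_(p in U) a p (p \in E)) *
      \prod_(i in S) ((x i \in E) == (y i \in E))%:R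
  = \prod_(i in S) (a (x i) true * a (y i) true + a (x i) false * a (y i) false).
Proof.
move=> a1 ix iy xU yU xy.
set Y := y @: S; set U' := U :\: Y.
have YU : Y \subset U by apply/subsetP => p /imsetP [i iS ->]; exact: yU.
have eU : U = U' :|: Y.
  apply/setP => p; rewrite !inE; case pY: (p \in Y); rewrite ?andbT ?orbT ?orbF //.
  by rewrite (subsetP YU).
have dUY : [disjoint U' & Y].
  by rewrite disjoints_subset; apply/subsetP => p; rewrite !inE => /andP [].
have xU' : forall i, i \in S -> x i \in U'.
  move=> i iS; rewrite !inE xU // andbT; apply/imsetP => -[j jS /eqP].
  by rewrite (negbTE (xy i j iS jS)).
rewrite [in LHS]eU IND //.
pose pky p := [pick i in S | y i == p].
pose pkx p := [pick i in S | x i == p].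
transitivity (\sum_(E1 in powerset U') (\prod_(p in U') a p (p \in E1)) *
    \prod_(i in S) a (y i) (x i \in E1)).
  apply: eq_bigr => E1; rewrite powersetE => s1; congr (_ * _).
  pose c p b := a p b * oapp (fun i => ((x i \in E1) == b)%:R) 1 (pky p).
  transitivity (\sum_(E2 in powerset Y) \prod_(p in Y) c p (p \in E2)).
    apply: eq_bigr => E2; rewrite powersetE => s2.
    rewrite /c big_split /=; congr (_ * _).
    rewrite (prod_pull _ (U := Y) (f := y)) //; last first.
      by move=> i iS; apply: imset_f.
    apply: eq_bigr => p pY; rewrite /pky.
    case: pickP => //= i /andP [iS /eqP yip].
    have -> : (x i \in E1 :|: E2) = (x i \in E1).
      rewrite inE; case: (x i \in E1) => //=; apply/negP => /(subsetP s2) xY.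
      by move: dUY => /disjointFr /(_ (xU' i iS)); rewrite xY.
    have -> : (y i \in E1 :|: E2) = (y i \in E2).
      rewrite inE yip; case: (p \in E2); rewrite ?orbT ?orbF //.
      apply/negP => /(subsetP s1); rewrite inE pY.
      done.
    by rewrite yip.
  rewrite L1.
  rewrite (prod_pull _ (U := Y) (f := y)) //; last by move=> i iS; apply: imset_f.
  apply: eq_bigr => p pY; rewrite /c /pky.
  case: pickP => /= [i /andP [iS /eqP yip]|_]; last by rewrite !mulr1 a1 // (subsetP YU).
  by rewrite yip; case: (x i \in E1); rewrite /= ?mulr1 ?mulr0 ?addr0 ?add0r.
pose d p b := a p b * oapp (fun i => a (y i) b) 1 (pkx p).
transitivity (\sum_(E1 in powerset U') \prod_(p in U') d p (p \in E1)).
  apply: eq_bigr => E1 _; rewrite /d big_split /=; congr (_ * _).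
  rewrite (prod_pull _ (U := U') (f := x)) //.
  apply: eq_bigr => p pU; rewrite /pkx.
  by case: pickP => //= i /andP [iS /eqP ->].
rewrite L1 (prod_pull _ (U := U') (f := x)) //.
apply: eq_bigr => p pU; rewrite /d /pkx.
case: pickP => /= [i /andP [iS /eqP xip]|_]; last first.
  by rewrite !mulr1 a1 //; move: pU; rewrite inE => /andP [].
by rewrite xip.
Qed.
End Generic.

Section Cnt.
Variables (n c : nat) (comm : 'I_n -> 'I_c).
Local Notation A i := [set v : 'I_n | comm v == i].
Definition Npair (i j : 'I_c) := #|[set p in upairs n | (comm p.1 == i) && (comm p.2 == j)]|.

Lemma count_all i j :
  csize comm i * csize comm j = Npair i j + Npair j i + #|A i :&: A j|.
Proof.
rewrite /csize -cardsX.
set X := setX (A i) (A j).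
rewrite -(cardsID (upairs n) X).
have -> : X :&: upairs n = [set p in upairs n | (comm p.1 == i) && (comm p.2 == j)].
  by apply/setP => -[x y]; rewrite !inE /= andbC.
rewrite -addnA; congr (_ + _).
set L := [set p : 'I_n * 'I_n | (p.2 < p.1)%N].
rewrite -(cardsID L).
congr (_ + _).
  have -> : Npair j i = #|swap_pair @: [set p in upairs n | (comm p.1 == j) && (comm p.2 == i)]|.
    by rewrite (card_imset _ (can_inj (@swap_pairK _ _))).
  apply: eq_card => -[x y]; rewrite !inE /=.
  apply/idP/idP.
    case/andP => /and3P [nl ci cj] l.
    apply/imsetP; exists (y, x) => //; by rewrite !inE /= l ci cj.
  case/imsetP => -[x' y'] ; rewrite !inE /= => /andP [l /andP [ci cj]] [-> ->].
  by rewrite ci cj l /= -leqNgt ltnW.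
rewrite -(card_imset _ (f := fun v : 'I_n => (v, v))); last by move=> a b [].
apply: eq_card => -[x y]; rewrite !inE /=.
apply/idP/idP.
  case/and4P => nl l ci cj.
  have xy : x = y by apply: val_inj; apply/eqP; rewrite eqn_leq leqNgt nl leqNgt l.
  by apply/imsetP; exists x; rewrite ?inE ?ci -?xy ?cj // xy.
case/imsetP => v; rewrite !inE => /andP [ci cj] [-> ->].
by rewrite ci cj ltnn.
Qed.

Lemma N_diag i : Npair i i = 'C(csize comm i, 2).
Proof.
have := count_all i i; rewrite setIid -/(csize comm i).
set m := csize comm i; set N := Npair i i => h.
rewrite bin2.
have -> : m * m.-1 = N.*2 by move: h; case: m => [|m'] /=; lia.
by rewrite doubleK.
Qed.

Lemma N_off i j : i != j -> Npair i j + Npair j i = csize comm i * csize comm j.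
Proof.
move=> ij; rewrite count_all.
suff -> : A i :&: A j = set0 by rewrite cards0 addn0.
apply/setP => v; rewrite !inE; apply/negP => /andP [/eqP -> /eqP e].
by move: ij; rewrite e eqxx.
Qed.
End Cnt.

Lemma group_sum (n c : nat) (comm : 'I_n -> 'I_c) (Rr : comNzRingType)
  (g : 'I_c -> 'I_c -> Rr) : (forall i j, g i j = g j i) ->
  (\sum_(p in upairs n) g (comm p.1) (comm p.2) =
   \sum_(i : 'I_c) \sum_(j : 'I_c | (i <= j)%N) (s_coef comm i j)%:R * g i j)%R.
Proof.
move=> gs.
transitivity (\sum_(i : 'I_c) \sum_(j : 'I_c) (Npair comm i j)%:R * g i j)%R.
  rewrite (partition_big (fun p : 'I_n * 'I_n => comm p.1) predT) //=.
  apply: eq_bigr => i _.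
  rewrite (partition_big (fun p : 'I_n * 'I_n => comm p.2) predT) //=.
  apply: eq_bigr => j _.
  rewrite (eq_bigr (fun _ => g i j)); last first.
    by move=> p /andP [/andP [_ /eqP ->] /eqP ->].
  rewrite sumr_const mulr_natl /Npair; congr (_ *+ _)%R.
  apply: eq_card => p; rewrite -topredE /= !inE; by case: (p.1 < p.2)%N; case: (comm p.1 == i).
transitivity (\sum_(i : 'I_c) (\sum_(j : 'I_c | (i <= j)%N) (Npair comm i j)%:R * g i j
     + \sum_(j : 'I_c | (i < j)%N) (Npair comm j i)%:R * g i j))%R.
  rewrite big_split /=.
  have -> : (\sum_(i : 'I_c) \sum_(j : 'I_c | (i < j)%N) (Npair comm j i)%:R * g i j =
             \sum_(i : 'I_c) \sum_(j : 'I_c | (j < i)%N) (Npair comm i j)%:R * g i j)%R.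
    rewrite (exchange_big_dep predT) //=.
    by apply: eq_bigr => i _; apply: eq_bigr => j _; rewrite gs.
  rewrite -big_split /=; apply: eq_bigr => i _.
  rewrite (bigID (fun j : 'I_c => (i <= j)%N)) /=. congr (_ + _)%R; apply: eq_bigl => j; by rewrite -ltnNge.
apply: eq_bigr => i _.
rewrite [X in (X + _)%R](bigD1 i) //= [RHS](bigD1 i) //=.
have E (F : 'I_c -> Rr) : (\sum_(j < c | (i <= j)%N && (j != i)) F j = \sum_(j < c | (i < j)%N) F j)%R.
  apply: eq_bigl => j; rewrite ltn_neqAle andbC; congr (_ && _).
  by rewrite eq_sym.
rewrite !E -addrA -big_split /= /s_coef eqxx N_diag; congr (_ + _)%R.
apply: eq_bigr => j lt; rewrite -mulrDl -natrD.
by rewrite ifN ?N_off // neq_ltn lt.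
Qed.

Section P124.
Variables (n : nat) (Rr : realFieldType) (c : nat) (comm : 'I_n -> 'I_c) (P : 'M[Rr]_c).
Hypothesis HP01 : forall i j : 'I_c, (0 <= P i j <= 1)%R.
Implicit Types (E : {set 'I_n * 'I_n}) (u v r : 'I_n).

Lemma agreeC E R u v : rows_agree E R u v = rows_agree E R v u.
Proof. by apply: eq_forallb => r; rewrite eq_sym. Qed.

Lemma part1_pt E R : ~~ resolves_mx E R = (0 < Wcount E R)%N.
Proof.
rewrite /Wcount card_gt0; apply/idP/idP.
  case/forallPn => u /forallPn [v]; rewrite negb_imply negbK => /andP [uv ag].
  apply/set0Pn.
  case: (ltngtP u v) => [lt|lt|eq].
  - by exists (u, v); rewrite inE /= lt ag.
  - by exists (v, u); rewrite inE /= lt agreeC ag.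
  - by move: uv; rewrite (val_inj eq) eqxx.
case/set0Pn => -[u v]; rewrite inE /= => /andP [lt ag].
apply/forallPn; exists u; apply/forallPn; exists v.
rewrite negb_imply negbK ag andbT; apply/eqP => e; by move: lt; rewrite e ltnn.
Qed.

Lemma weight_ge0 E : (0 <= sbm_weight comm P E)%R.
Proof.
apply: prodr_ge0 => p _; case: ifP => _; have /andP [h0 h1] := HP01 (comm p.1) (comm p.2) => //.
by rewrite subr_ge0.
Qed.

Lemma part2 R : (sbm_prob comm P (fun E => (0 < Wcount E R)%N)
      <= sbm_exp comm P (fun E => Wcount E R))%R.
Proof.
rewrite /sbm_prob /sbm_exp big_mkcondr /=; apply: ler_sum => E _.
case: ifP => h; last by rewrite mulr_ge0 ?weight_ge0.
by apply: ler_peMr; rewrite ?weight_ge0 // ler1n.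
Qed.

Lemma r_coef01 i j l : (0 <= r_coef P i j l <= 1)%R.
Proof.
rewrite /r_coef.
have /andP [a0 a1] := HP01 i l; have /andP [b0 b1] := HP01 j l.
apply/andP; split; first by rewrite addr_ge0 // mulr_ge0 // subr_ge0.
nra.
Qed.

Lemma part4 k1 k2 : (forall l, k1 l <= k2 l)%N ->
  (fbound comm P k2 <= fbound comm P k1)%R.
Proof.
move=> hk; apply: ler_sum => i _; apply: ler_sum => j _.
apply: ler_wpM2l; first by rewrite ler0n.
apply: ler_prod => l _; have /andP [r0 r1] := r_coef01 i j l.
by rewrite exprn_ge0 //= ler_wiXn2l.
Qed.
End P124.

Section P5.
Variable n : nat.
Implicit Types (E : {set 'I_n * 'I_n}) (u v r : 'I_n).

Lemma adjC E u v : adj E u v = adj E v u.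
Proof. by rewrite /adj orbC. Qed.

Lemma dist_ball E r u d : dist E r u = Some d -> u \in ball E r d.
Proof.
rewrite /dist; case: ifP => // lt [<-].
set p := (fun d => u \in ball E r d).
have hp : has p (iota 0 n) by rewrite has_find size_iota.
have := nth_find 0 hp; by rewrite nth_iota // add0n.
Qed.

Lemma dist_exact E r u d : d < n -> u \in ball E r d ->
  (forall d', d' < d -> u \notin ball E r d') -> dist E r u = Some d.
Proof.
move=> ltd ub nb; rewrite /dist.
set p := (fun d => u \in ball E r d).
have hp : has p (iota 0 n) by apply/hasP; exists d; rewrite ?mem_iota.
have fle : find p (iota 0 n) <= d.
  rewrite leqNgt; apply/negP => lt.
  have := before_find 0 lt; rewrite nth_iota; last by apply: leq_trans ltd.
  by rewrite add0n /p ub.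
have fd : find p (iota 0 n) = d.
  apply/eqP; rewrite eqn_leq fle /=; rewrite leqNgt; apply/negP => lt.
  have := nth_find 0 hp; rewrite nth_iota; last by apply: leq_ltn_trans ltd.
  by rewrite add0n /p => ub2; move: (nb _ lt); rewrite ub2.
by rewrite fd ltd.
Qed.

Lemma ball1 E r u : (u \in ball E r 1) = (u == r) || adj E r u.
Proof.
rewrite /= !inE; congr (_ || _); apply/existsP/idP => [[w]|h].
  by rewrite inE => /andP [/eqP -> ].
by exists r; rewrite inE eqxx.
Qed.

Lemma dist_r E r : dist E r r = Some 0.
Proof.
apply: dist_exact => //; last by rewrite /= inE.
by case: r => m lt; apply: leq_ltn_trans lt.
Qed.

Lemma dist_adj E r u : u != r -> adj E r u -> dist E r u = Some 1.
Proof.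
move=> ur a; apply: dist_exact.
- have ne : (u : nat) <> r by move=> h; move/eqP: ur; apply; apply: val_inj.
  move: (ltn_ord u) (ltn_ord r); lia.
- by rewrite ball1 a orbT.
- by move=> [|d'] // _; rewrite /= inE.
Qed.

Lemma dist_diff E r u v : u != v ->
  Astar E u r != Astar E v r -> dist E r u != dist E r v.
Proof.
wlog: u v / (u == r) || (adj E u r && ~~ adj E v r && (v != r) && (u != r)).
  move=> W uv.
  case: (eqVneq u r) => [ur|ur]; first by apply: W => //; rewrite ur eqxx.
  case: (eqVneq v r) => [vr|vr].
    move=> h; rewrite eq_sym; apply: W.
    - by rewrite vr eqxx.
    - by rewrite eq_sym.
    - by rewrite eq_sym.
  rewrite /Astar (negbTE ur) (negbTE vr).
  case au: (adj E u r); case av: (adj E v r) => //= _.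
    apply: W; first by rewrite au av vr ur orbT.
      by [].
    by rewrite /Astar (negbTE ur) (negbTE vr) au av.
  rewrite eq_sym; apply: W; first by rewrite au av ur vr orbT.
    by rewrite eq_sym.
  by rewrite /Astar (negbTE ur) (negbTE vr) au av.
case/orP => [/eqP ->|/andP [/andP [/andP [au nav] vr] ur]] uv ne.
  rewrite dist_r; apply/eqP => /esym /dist_ball; rewrite /= inE => /eqP vr.
  by move: uv; rewrite vr eqxx.
rewrite dist_adj // 1?adjC //; apply/eqP => /esym /dist_ball.
by rewrite ball1 (negbTE vr) adjC (negbTE nav).
Qed.

Lemma part5 E R : resolves_mx E R -> resolves_graph E R.
Proof.
move=> /forallP h u v hd; apply/eqP/negPn/negP => uv.
move: (h u) => /forallP /(_ v); rewrite uv /= => /forallP; apply => r.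
apply/implyP => rR; apply/negPn/negP => ne.
by have := dist_diff uv ne; rewrite hd // eqxx.
Qed.
End P5.

Section P3.
Variables (n : nat) (Rr : realFieldType) (c : nat) (comm : 'I_n -> 'I_c) (P : 'M[Rr]_c).
Hypothesis HPsym : (P^T)%R = P.
Hypothesis HP01 : forall i j : 'I_c, (0 <= P i j <= 1)%R.
Implicit Types (E : {set 'I_n * 'I_n}) (u v r : 'I_n) (R : {set 'I_n}).

Definition sp u r : 'I_n * 'I_n := if (u < r)%N then (u, r) else (r, u).

Lemma ltn_neq_ord u r : u != r -> (u < r)%N || (r < u)%N.
Proof.
move=> ur; case: (ltngtP u r) => // e; move: ur; by rewrite (val_inj e) eqxx.
Qed.

Lemma sp_up u r : u != r -> sp u r \in upairs n.
Proof.
move=> ur; rewrite /sp inE; case: ifP => //= h.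
by move: (ltn_neq_ord ur); rewrite h.
Qed.

Lemma adj_sp E u r : E \subset upairs n -> u != r -> adj E u r = (sp u r \in E).
Proof.
move=> sE ur; rewrite /adj /sp.
case: ifP => h.
  case e: ((r, u) \in E); rewrite ?orbF //.
  by move/subsetP: sE => /(_ _ e); rewrite inE /= ltnNge ltnW.
case e: ((u, r) \in E) => //=.
by move/subsetP: sE => /(_ _ e); rewrite inE /= h.
Qed.

Lemma sp_inj u r r' : r != u -> r' != u -> sp u r = sp u r' -> r = r'.
Proof.
move=> ru r'u; rewrite /sp; case: ifP; case: ifP => // _ _ [].
- by [].
- by move=> e; move: r'u; rewrite e eqxx.
- by move=> e; move: ru; rewrite e eqxx.
- by [].
Qed.

Lemma sp_neq u v r r' : u != v -> u != r' -> sp u r != sp v r'.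
Proof.
move=> uv ur'; apply/eqP; rewrite /sp; case: ifP; case: ifP => // _ _ [].
- by move=> e; move: uv; rewrite e eqxx.
- by move=> e; move: ur'; rewrite e eqxx.
- by move=> _ e; move: ur'; rewrite e eqxx.
- by move=> _ e; move: uv; rewrite e eqxx.
Qed.

Lemma Psym i j : P i j = P j i.
Proof. by have := congr1 (fun M : 'M[Rr]_c => M j i) HPsym; rewrite mxE. Qed.

Lemma Pa u r : P (comm (sp u r).1) (comm (sp u r).2) = P (comm u) (comm r).
Proof. by rewrite /sp; case: ifP => //= _; rewrite Psym. Qed.

Lemma forall_prod (R : {set 'I_n}) (b : 'I_n -> bool) :
  (([forall r in R, b r] : nat)%:R = \prod_(r in R) ((b r : nat)%:R) :> Rr)%R.
Proof.
case: (boolP [forall r in R, b r]) => [/forall_inP h|/forall_inPn [r rR nb]].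
  by rewrite big1 // => r /h ->.
by rewrite (bigD1 r) //= (negbTE nb) mul0r.
Qed.

Lemma agree_prod E R u v : E \subset upairs n -> u \notin R -> v \notin R ->
  ((rows_agree E R u v : nat)%:R = \prod_(r in R) (((sp u r \in E) == (sp v r \in E)) : nat)%:R :> Rr)%R.
Proof.
move=> sE uR vR; rewrite /rows_agree forall_prod; apply: eq_bigr => r rR.
have ur : u != r by apply/eqP => e; move: uR; rewrite e rR.
have vr : v != r by apply/eqP => e; move: vR; rewrite e rR.
rewrite /Astar (negbTE ur) (negbTE vr) -!adj_sp //.
by case: adj; case: adj.
Qed.

Lemma Q_eq R u v : u != v -> u \notin R -> v \notin R ->
  (\sum_(E in powerset (upairs n)) sbm_weight comm P E * (rows_agree E R u v : nat)%:R =
   \prod_(r in R) r_coef P (comm u) (comm v) (comm r))%R.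
Proof.
move=> uv uR vR.
transitivity (\sum_(E in powerset (upairs n)) sbm_weight comm P E *
   \prod_(r in R) (((sp u r \in E) == (sp v r \in E)) : nat)%:R)%R.
  apply: eq_bigr => E; rewrite powersetE => sE; by rewrite agree_prod.
have nin x r : x \notin R -> r \in R -> r != x.
  by move=> xR rR; apply/eqP => e; move: xR; rewrite -e rR.
etransitivity.
  apply: (GL (a := fun p b => if b then P (comm p.1) (comm p.2)
                              else 1 - P (comm p.1) (comm p.2))%R).
  - by move=> p _ /=; rewrite addrC subrK.
  - by move=> r r' rR r'R; apply: sp_inj; apply: nin.
  - by move=> r r' rR r'R; apply: sp_inj; apply: nin.
  - by move=> r rR; apply: sp_up; rewrite eq_sym; apply: nin.
  - by move=> r rR; apply: sp_up; rewrite eq_sym; apply: nin.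
  - by move=> r r' rR r'R; apply: sp_neq => //; rewrite eq_sym; apply: nin.
by apply: eq_bigr => r rR /=; rewrite !Pa.
Qed.

Lemma agree_false E R u v : u != v -> (u \in R) || (v \in R) -> rows_agree E R u v = false.
Proof.
move=> uv /orP [uR|vR]; apply/negbTE/forall_inPn.
  have vu : (v == u) = false by rewrite eq_sym (negbTE uv).
  exists u => //; rewrite /Astar eqxx vu; by case: adj.
exists v => //; rewrite /Astar eqxx (negbTE uv); by case: adj.
Qed.

Lemma r_coefC i j l : r_coef P i j l = r_coef P j i l.
Proof. by rewrite /r_coef mulrC [((1 - _) * _)%R]mulrC. Qed.

Lemma prod_comm_pow (R : {set 'I_n}) (k : 'I_c -> nat) (F : 'I_c -> Rr) :
  (forall l : 'I_c, #|R :&: [set v | comm v == l]| = k l) ->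
  (\prod_(r in R) F (comm r) = \prod_(l : 'I_c) F l ^+ k l)%R.
Proof.
move=> HR.
rewrite (partition_big (fun r => comm r) predT) //=.
apply: eq_bigr => l _.
rewrite (eq_bigr (fun _ => F l)); last by move=> r /andP [_ /eqP ->].
rewrite prodr_const -HR; congr (_ ^+ _)%R.
by apply: eq_card => r; rewrite -topredE /= !inE.
Qed.

Lemma part3 (k : 'I_c -> nat) (R : {set 'I_n}) :
  (forall l : 'I_c, #|R :&: [set v | comm v == l]| = k l) ->
  (sbm_exp comm P (fun E => Wcount E R) <= fbound comm P k)%R.
Proof.
move=> HR.
set g := fun i j => (\prod_(l : 'I_c) r_coef P i j l ^+ k l)%R.
have g0 i j : (0 <= g i j)%R.
  by apply: prodr_ge0 => l _; apply: exprn_ge0; case/andP: (r_coef01 HP01 i j l).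
have -> : fbound comm P k = (\sum_(p in upairs n) g (comm p.1) (comm p.2))%R.
  rewrite (@group_sum n c comm Rr g) //.
  by move=> i j; rewrite /g; apply: eq_bigr => l _; rewrite r_coefC.
have WE E : Wcount E R = (\sum_(p in upairs n) (rows_agree E R p.1 p.2 : nat))%N.
  rewrite /Wcount -sum1dep_card big_mkcondr /=; apply: eq_big => p.
    by rewrite inE.
  by move=> _; case: rows_agree.
rewrite /sbm_exp.
under eq_bigr => E _ do rewrite WE natr_sum big_distrr /=.
rewrite exchange_big /=; apply: ler_sum => -[u v]; rewrite inE /= => lt.
have uv : u != v by apply/eqP => e; move: lt; rewrite e ltnn.
case: (boolP ((u \in R) || (v \in R))) => h.
  rewrite big1 // => E _; by rewrite agree_false // mulr0.
rewrite negb_or in h; case/andP: h => uR vR.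
by rewrite Q_eq // (prod_comm_pow _ HR).
Qed.
End P3.

Theorem mainTheorem9 (Rr : realFieldType) (n c : nat) (comm : 'I_n -> 'I_c)
    (P : 'M[Rr]_c)
    (HPsym : (P^T)%R = P)
    (HP01 : forall i j : 'I_c, (0 <= P i j <= 1)%R)
    (k : 'I_c -> nat) (R : {set 'I_n})
    (HR : forall l : 'I_c, #|R :&: [set v | comm v == l]| = k l) :
  sbm_prob comm P (fun E => ~~ resolves_mx E R)
    = sbm_prob comm P (fun E => (0 < Wcount E R)%N)
  /\ (sbm_prob comm P (fun E => (0 < Wcount E R)%N)
      <= sbm_exp comm P (fun E => Wcount E R))%R
  /\ (sbm_exp comm P (fun E => Wcount E R) <= fbound comm P k)%R
  /\ (forall k1 k2 : 'I_c -> nat, (forall l, k1 l <= k2 l)%N ->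
        (fbound comm P k2 <= fbound comm P k1)%R)
  /\ (forall E : {set 'I_n * 'I_n}, E \subset upairs n ->
        resolves_mx E R -> resolves_graph E R).
Proof.
split.
  by apply: eq_bigl => E; rewrite part1_pt.
split; first exact: part2 HP01 R.
split; first exact: (@part3 n Rr c comm P HPsym HP01 k R HR).
split; first by move=> k1 k2; apply: part4.
by move=> E _; apply: part5.
Qed.
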